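(* Let $m\geq 3$ and $n\in \mathbb{N}$. Then \[ \sigma'_m(n) = -n\, e_{m+2,n}+\sum_{k=1}^{n-1} (-1)^{k+1} \big( \sigma'_m(n-P_{m+2,k})+\sigma'_m(n- Q_{m+2,k}) \big), \] where $P_{m+2,k}=\frac{k(mk-(m-2))}{2}$ and $Q_{m+2,k}=\frac{k(mk+(m-2))}{2}$.
   Context: For $m\ge3$ and $n\in\mathbb{N}$, $\sigma'_m(n)$ is the sum of the positive divisors $d$ of $n$ with $d\equiv 0$, $1$ or $m-1 \pmod m$; set $\sigma'_m(x)=0$ for integers $x\le 0$. For $g\ge5$ and $n\in\mathbb{N}_0$, $e_{g,n}=1$ if $n=0$, $e_{g,n}=(-1)^k$ if $n=P_{g,k}$ or $n=Q_{g,k}$ for some $k\in\mathbb{N}$ (where $P_{g,k}=\frac{k((g-2)k-(g-4))}{2}$, $Q_{g,k}=\frac{k((g-2)k+(g-4))}{2}$), and $e_{g,n}=0$ otherwise. *)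

(* Defs.v *)
From mathcomp Require Import all_boot all_algebra.
Set Implicit Arguments. Unset Strict Implicit. Unset Printing Implicit Defensive.
Import GRing.Theory Num.Theory.
Local Open Scope ring_scope.

Definition sigmap_nat (m n : nat) : nat :=
  \sum_(d <- divisors n | [|| d %% m == 0, d %% m == 1 | d %% m == m.-1]%N) d.

Definition sigmap (m : nat) (x : int) : int :=
  if (0 < x)%R then (sigmap_nat m `|x|%N)%:Z else 0.

(* Generalized pentagonal numbers (as natural numbers; for g >= 5 and
   k >= 1 the quantities are nonnegative integers). *)
Definition Pgk (g k : nat) : nat := (k * ((g - 2) * k - (g - 4)) %/ 2)%N.
Definition Qgk (g k : nat) : nat := (k * ((g - 2) * k + (g - 4)) %/ 2)%N.

(* e_{g,n}: 1 if n = 0, (-1)^k if n = P_{g,k} or Q_{g,k} for some k >= 1,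
   0 otherwise.  Since P_{g,k}, Q_{g,k} >= k for g >= 5, it suffices to
   search k in 1..n. *)
Definition eg (g n : nat) : int :=
  if n == 0%N then 1 else
  if [pick k : 'I_n.+1 | (0 < k)%N && ((Pgk g k == n) || (Qgk g k == n))]
     is Some k then (-1) ^+ k else 0.

(* Main.v *)
Require Import Defs.
From mathcomp Require Import all_boot all_algebra.
From mathcomp Require Import zify ring lra.
Import GRing.Theory Num.Theory.
Local Open Scope ring_scope.
Fixpoint qbin (Q : {poly int}) (n k : nat) : {poly int} :=
  match n, k with
  | 0%N, 0%N => 1
  | 0%N, _.+1 => 0
  | n'.+1, 0%N => 1
  | n'.+1, k'.+1 => qbin Q n' k' + Q ^+ k'.+1 * qbin Q n' k'.+1
  end.

Definition qp (Q : {poly int}) (a : nat) : {poly int} := \prod_(t < a) (1 - Q ^+ t.+1).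

Lemma qbin_gt Q n k : (n < k)%N -> qbin Q n k = 0.
Proof.
elim: n k => [|n IH] [|k] //= H.
by rewrite !IH ?mulr0 ?addr0 //; lia.
Qed.

Lemma qbin_n0 Q n : qbin Q n 0 = 1.
Proof. by case: n. Qed.

Lemma C2S i : 'C(i.+1, 2) = ('C(i, 2) + i)%N.
Proof. by rewrite binS bin1. Qed.

Lemma qbin_thm Q n : forall y z : {poly int},
  \prod_(t < n) (z + y * Q ^+ t) =
  \sum_(r < n.+1) qbin Q n r * Q ^+ 'C(r, 2) * y ^+ r * z ^+ (n - r).
Proof.
elim: n => [|n IH] y z.
  by rewrite big_ord0 big_ord1 /= !expr0 !mulr1.
rewrite big_ord_recl expr0 mulr1.
under eq_bigr do rewrite /bump /= exprS mulrA.
rewrite IH mulrDl !big_distrr /=.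
rewrite [RHS]big_ord_recl /= expr0 !mulr1 subn0.
under [X in _ = _ + X]eq_bigr do rewrite /bump /= add1n mulrDl mulrDl mulrDl.
rewrite big_split /= [X in _ = _ + X]addrC addrA; congr (_ + _).
- rewrite big_ord_recl /= expr0 !mulr1 subn0 qbin_n0 mul1r -exprS mul1r.
  rewrite big_ord_recr /= qbin_gt // mulr0 !mul0r addr0.
  congr (_ + _); apply: eq_bigr => i _; rewrite /bump /= !add1n add0n.
  rewrite subSS.
  have -> : (n - i = (n - i.+1).+1)%N by have := ltn_ord i; lia.
  rewrite C2S !exprD !exprS exprMn; ring.
- apply: eq_bigr => i _; rewrite add0n subSS C2S !exprD !exprS exprMn; ring.
Qed.

Lemma qp_S Q a : qp Q a.+1 = qp Q a * (1 - Q ^+ a.+1).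
Proof. by rewrite /qp big_ord_recr. Qed.

Lemma qbin_qp Q n k : (k <= n)%N -> qbin Q n k * qp Q k * qp Q (n - k) = qp Q n.
Proof.
elim: n k => [|n IH] [|k] //= Hk.
- by rewrite /qp !big_ord0 !mulr1.
- by rewrite /qp big_ord0 subn0 !mul1r.
rewrite subSS qp_S [qp Q n.+1]qp_S.
have H1 := IH k Hk.
case: (ltnP k n) => Hkn.
  have H2 := IH k.+1 Hkn.
  have Ed : (n - k = (n - k.+1).+1)%N by lia.
  have EQ : (Q ^+ n.+1 = Q ^+ k.+1 * Q ^+ (n - k))%R by rewrite -exprD; congr (_ ^+ _); lia.
  have HH : qp Q n * (1 - Q ^+ n.+1) = (qbin Q n k * qp Q k * qp Q (n - k)) * (1 - Q ^+ k.+1)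
     + Q ^+ k.+1 * (qbin Q n k.+1 * (qp Q k * (1 - Q ^+ k.+1)) * qp Q (n - k.+1)) * (1 - Q ^+ (n - k)).
    by rewrite H1 -(qp_S Q k) H2 EQ; ring.
  rewrite HH Ed qp_S; ring.
have Ekn : k = n by lia.
subst k.
rewrite (@qbin_gt Q n n.+1 (ltnSn n)) mulr0 addr0 subnn.
move: H1; rewrite subnn => H1.
by rewrite -[in RHS]H1; ring.
Qed.

Definition Lprod (m N : nat) : {poly int} :=
  \prod_(t < N) ((1 - 'X^(m * t + 1)) * (1 - 'X^(m * t + (m - 1)))).

Lemma prodX (f : nat -> nat) N :
  \prod_(t < N) ('X^(f t) : {poly int}) = 'X^(\sum_(t < N) f t).
Proof.
by rewrite (big_morph (fun n => ('X : {poly int}) ^+ n) (exprD 'X) (expr0 'X)).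
Qed.

Lemma sum_mt m N : (\sum_(t < N) m * t = m * 'C(N, 2))%N.
Proof.
elim: N => [|N IH]; first by rewrite big_ord0 bin0n muln0.
by rewrite big_ord_recr /= IH C2S mulnDr.
Qed.

Lemma prod_inst m M : (3 <= m)%N ->
  \prod_(t < M.+1 + M.+1) ('X^(m * M + 1) + (-1) * ('X^m) ^+ t) =
  (-1) ^+ M.+1 * 'X^(m * 'C(M.+1, 2) + M.+1 * (m * M + 1)) * Lprod m M.+1.
Proof.
move=> Hm.
rewrite big_split_ord /=.
have E1 : forall t : 'I_M.+1, 'X^(m * M + 1) + (-1) * ('X^m) ^+ t =
   (-1) * 'X^(m * t) * (1 - 'X^(m * (M - t) + 1)) :> {poly int}.
  move=> t; rewrite /= -exprM.
  have -> : (m * M + 1 = m * t + (m * (M - t) + 1))%N.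
    have := ltn_ord t; rewrite ltnS => Ht.
    by rewrite addnA -mulnDr subnKC.
  rewrite exprD; ring.
have E2 : forall t : 'I_M.+1, 'X^(m * M + 1) + (-1) * ('X^m) ^+ (M.+1 + t) =
   'X^(m * M + 1) * (1 - 'X^(m * t + (m - 1))) :> {poly int}.
  move=> t; rewrite /= -exprM.
  have -> : (m * (M.+1 + t) = m * M + 1 + (m * t + (m - 1)))%N.
    rewrite mulnDr mulnS; lia.
  by rewrite (exprD _ (m * M + 1) (m * t + (m - 1))); ring.
rewrite (eq_bigr _ (fun t _ => E1 t)) (eq_bigr _ (fun t _ => E2 t)).
rewrite !big_split /= prodX sum_mt prodr_const card_ord.
rewrite prodr_const card_ord -exprM exprD.
have -> : \prod_(i < M.+1) (1 - 'X^(m * (M - i) + 1)) = \prod_(i < M.+1) (1 - 'X^(m * i + 1)) :> {poly int}.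
  rewrite -(big_mkord xpredT (fun i => 1 - 'X^(m * i + 1))).
  rewrite big_rev_mkord subn0; apply: eq_bigr => i _.
  by rewrite subSS.
rewrite /Lprod big_split /=. rewrite [((m * M + 1) * _)%N]mulnC; ring.
Qed.
Definition eqT (T : nat) (p q : {poly int}) := forall i, (i <= T)%N -> p`_i = q`_i.

Lemma eqT_refl T p : eqT T p p. Proof. by []. Qed.
Lemma eqT_sym T p q : eqT T p q -> eqT T q p.
Proof. by move=> H i Hi; rewrite H. Qed.
Lemma eqT_trans T p q r : eqT T p q -> eqT T q r -> eqT T p r.
Proof. by move=> H1 H2 i Hi; rewrite H1 ?H2. Qed.
Lemma eqT_add T p q p' q' : eqT T p q -> eqT T p' q' -> eqT T (p + p') (q + q').
Proof. by move=> H1 H2 i Hi; rewrite !coefD H1 ?H2. Qed.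
Lemma eqT_opp T p q : eqT T p q -> eqT T (- p) (- q).
Proof. by move=> H1 i Hi; rewrite !coefN H1. Qed.
Lemma eqT_mull T r p q : eqT T p q -> eqT T (r * p) (r * q).
Proof.
move=> H i Hi; rewrite !coefM; apply: eq_bigr => j _; rewrite H //.
exact: leq_trans (leq_subr _ _) Hi.
Qed.
Lemma eqT_mulr T r p q : eqT T p q -> eqT T (p * r) (q * r).
Proof. by move=> H; rewrite ![_ * r]mulrC; apply: eqT_mull. Qed.
Lemma eqT_eq T p q : p = q -> eqT T p q.
Proof. by move=> ->. Qed.

Lemma eqT_cancel T x P : eqT T (x * P) 0 -> P`_0 = 1 -> eqT T x 0.
Proof.
move=> H P0.
suff: forall i, (i <= T)%N -> forall j, (j <= i)%N -> x`_j = 0.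
  by move=> K i Hi; rewrite coef0 (K i Hi i).
elim=> [|i IH] Hi j Hj.
  move: Hj; rewrite leqn0 => /eqP ->.
  by have := H 0%N (leq0n _); rewrite coef0 coef0M P0 mulr1.
rewrite leq_eqVlt in Hj; case/orP: Hj => [/eqP ->|Hj]; last first.
  by apply: IH => //; exact: ltnW.
have := H i.+1 Hi; rewrite coef0 coefM big_ord_recr /= subnn P0 mulr1.
rewrite big1 ?add0r // => k _.
by rewrite IH ?mul0r //; [exact: ltnW | rewrite -ltnS].
Qed.

Definition sL (L : seq nat) (i : nat) : int := \sum_(a <- L | (a %| i)%N) (a%:Z).
Definition Sser (T : nat) (L : seq nat) : {poly int} :=
  \poly_(i < T.+1) (if i == 0%N then 0 else sL L i).
Definition PL (L : seq nat) : {poly int} := \prod_(a <- L) (1 - 'X^a).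

Definition Sa (T a : nat) : {poly int} :=
  \poly_(i < T.+1) (if i == 0%N then 0 else if (a %| i)%N then a%:Z else 0).

Lemma Sser_cons T a L : Sser T (a :: L) = Sa T a + Sser T L.
Proof.
apply/polyP => i; rewrite coefD !coef_poly.
case: (i < T.+1)%N; last by rewrite addr0.
case: (i == 0%N); first by rewrite addr0.
rewrite /sL big_cons; case: (a %| i)%N => //; by rewrite add0r.
Qed.

Lemma Sa_key T a : (0 < a)%N -> eqT T ((1 - 'X^a) * Sa T a) ('X^a *+ a).
Proof.
move=> a0 i Hi.
rewrite mulrBl mul1r coefB coefXnM coefMn coefXn !coef_poly.
have HiT : (i < T.+1)%N by [].
rewrite HiT.
case: (ltnP i a) => Hia.
  rewrite (ltn_eqF Hia) mul0rn subr0.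
  case: (i =P 0%N) => // /eqP i0.
  have: ~~ (a %| i)%N.
    by apply/negP => /dvdn_leq; rewrite lt0n i0 => /(_ isT); rewrite leqNgt Hia.
  by move/negbTE => ->.
have HiaT : (i - a < T.+1)%N by rewrite ltnS (leq_trans (leq_subr _ _)).
rewrite HiaT.
have i0 : (i == 0%N) = false by apply/negbTE; rewrite -lt0n (leq_trans a0 Hia).
rewrite i0.
case: (eqVneq i a) => [Eia|Hne].
  by subst i; rewrite subnn eqxx dvdnn subr0 natz.
rewrite mul0rn.
have Hsub : (i - a == 0)%N = false.
  by apply/negbTE; rewrite subn_eq0 -ltnNge ltn_neqAle eq_sym Hne Hia.
rewrite Hsub.
have -> : (a %| i - a)%N = (a %| i)%N by rewrite dvdn_subl.
by case: (a %| i)%N; rewrite subrr.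
Qed.

Lemma logder T L : all (fun a => 0 < a)%N L ->
  eqT T ('X * (PL L)^`()) (- (PL L * Sser T L)).
Proof.
elim: L => [|a L IH] /=.
  rewrite /PL big_nil -polyC1 derivC mulr0 mul1r => _ i Hi.
  rewrite coef0 coefN coef_poly; case: ifP => // _; case: ifP => //.
  by rewrite /sL big_nil oppr0.
case/andP => a0 Hall.
rewrite /PL big_cons -/(PL L) Sser_cons derivM derivB -polyC1 derivC sub0r derivXn.
set P := PL L; set S := Sser T L.
have -> : 'X * (- ('X^(a.-1) *+ a) * P + (1 - 'X^a) * P^`()) =
          - ('X^a *+ a) * P + (1 - 'X^a) * ('X * P^`()).
  have Ea : ('X^a : {poly int}) = 'X * 'X^(a.-1) by rewrite -exprS prednK.
  rewrite Ea; ring.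
apply: (@eqT_trans _ _ (- ((1 - 'X^a) * Sa T a) * P + (1 - 'X^a) * (- (P * S)))).
  apply: eqT_add; last exact: eqT_mull (IH Hall).
  by apply: eqT_mulr; apply: eqT_opp; apply: eqT_sym; apply: Sa_key.
apply: eqT_eq; rewrite polyC1; ring.
Qed.

Lemma logder_coef T L j : all (fun a => 0 < a)%N L -> (j <= T)%N ->
  (PL L)`_j *+ j = - \sum_(i < j) sL L i.+1 * (PL L)`_(j - i.+1).
Proof.
move=> HL Hj; have := @logder T L HL j Hj.
case: j Hj => [|j] Hj; first by rewrite big_ord0 oppr0 mulr0n.
rewrite coefXM /= coef_deriv coefN mulrC coefM big_ord_recl coef_poly /= mul0r add0r.
move=> ->; congr (- _); apply: eq_bigr => i _.
rewrite coef_poly /bump /= add1n ltnS (leq_trans _ Hj) //.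
Qed.

Lemma C2dbl k : (2 * 'C(k, 2) + k = k * k)%N.
Proof. elim: k => [|k IH] //; rewrite C2S; lia. Qed.

Lemma C2add a b : ('C(a + b, 2) = 'C(a, 2) + a * b + 'C(b, 2))%N.
Proof. elim: b => [|b IH]; first by rewrite addn0 muln0 (_ : 'C(0, 2) = 0%N) // !addn0.
by rewrite addnS !C2S IH; lia. Qed.

Lemma Pgk_eq m k : (2 <= m)%N -> Pgk (m + 2) k = (m * 'C(k, 2) + k)%N.
Proof.
move=> Hm; rewrite /Pgk.
have -> : (m + 2 - 2 = m)%N by lia.
have -> : (m + 2 - 4 = m - 2)%N by lia.
have -> : (k * (m * k - (m - 2)) = (m * 'C(k, 2) + k) * 2)%N.
  have := C2dbl k; case: k => [|k] H; first by rewrite (_ : 'C(0, 2) = 0%N) //; lia.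
  nia.
by rewrite mulnK.
Qed.

Lemma Qgk_eq m k : (2 <= m)%N -> Qgk (m + 2) k = (m * 'C(k, 2) + (m - 1) * k)%N.
Proof.
move=> Hm; rewrite /Qgk.
have -> : (m + 2 - 2 = m)%N by lia.
have -> : (m + 2 - 4 = m - 2)%N by lia.
have -> : (k * (m * k + (m - 2)) = (m * 'C(k, 2) + (m - 1) * k) * 2)%N.
  have := C2dbl k; nia.
by rewrite mulnK.
Qed.

Definition Ef (m N r : nat) : nat :=
  if (N <= r)%N then Qgk (m + 2) (r - N) else Pgk (m + 2) (N - r).

Lemma expo m M r : (3 <= m)%N -> (r <= M.+1 + M.+1)%N ->
  (m * 'C(r, 2) + (m * M + 1) * (M.+1 + M.+1 - r) =
   m * 'C(M.+1, 2) + M.+1 * (m * M + 1) + Ef m M.+1 r)%N.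
Proof.
move=> Hm Hr; rewrite /Ef.
case: (leqP M.+1 r) => HN.
  rewrite Qgk_eq; last lia.
  have [k Hk] : exists k, r = (M.+1 + k)%N by exists (r - M.+1)%N; lia.
  subst r.
  have -> : (M.+1 + k - M.+1 = k)%N by lia.
  rewrite C2add.
  have [j Hj] : exists j, M.+1 = (k + j)%N by exists (M.+1 - k)%N; lia.
  have -> : (M.+1 + M.+1 - (M.+1 + k) = j)%N by lia.
  nia.
rewrite Pgk_eq; last lia.
have [k Hk] : exists k, M.+1 = (r + k)%N by exists (M.+1 - r)%N; lia.
rewrite Hk.
have -> : (r + k - r = k)%N by lia.
have -> : (r + k + (r + k) - r = r + k + k)%N by lia.
rewrite C2add.
have := C2dbl k.
nia.
Qed.


Lemma Xn_neq0 n : ('X^n : {poly int}) != 0.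
Proof. by rewrite monic_neq0 // monicXn. Qed.

Lemma theta_exact m M : (3 <= m)%N ->
  Lprod m M.+1 = \sum_(r < (M.+1 + M.+1).+1)
     (-1) ^+ (r + M.+1) * qbin ('X^m) (M.+1 + M.+1) r * 'X^(Ef m M.+1 r).
Proof.
move=> Hm.
set N := M.+1.
set c := (m * 'C(N, 2) + N * (m * M + 1))%N.
have H := qbin_thm ('X^m) (N + N) (-1) ('X^(m * M + 1)).
rewrite prod_inst // in H.
apply: (mulfI (Xn_neq0 c)).
have s2 : ((-1) ^+ N * (-1) ^+ N = 1 :> {poly int}).
  by rewrite -exprD -signr_odd addnn odd_double.
transitivity ((-1) ^+ N * ((-1) ^+ N * 'X^c * Lprod m N)).
  by rewrite !mulrA s2 mul1r.
rewrite H big_distrr big_distrr; apply: eq_bigr => r _.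
have Er := @expo m M r Hm (ltn_ord r).
rewrite -!exprM -/N in Er *.
have HX : ('X^(m * 'C(r, 2)) * 'X^((m * M + 1) * (N + N - r)) : {poly int}) = 'X^c * 'X^(Ef m N r).
  by rewrite -!exprD Er.
set G := qbin _ _ _.
transitivity ((-1) ^+ (r + N) * G * ('X^(m * 'C(r, 2)) * 'X^((m * M + 1) * (N + N - r)))).
  by rewrite /= exprD; ring.
by rewrite HX /=; ring.
Qed.

Lemma coef_sign k (p : {poly int}) i : ((-1) ^+ k * p)`_i = (-1) ^+ k * p`_i.
Proof.
elim: k => [|k IH]; first by rewrite !expr0 !mul1r.
by rewrite exprS -mulrA !mulN1r coefN IH exprS mulN1r mulNr.
Qed.

Lemma one_sub_X_T T e : (T < e)%N -> eqT T (1 - 'X^e) 1.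
Proof.
move=> He i Hi; rewrite coefB coefXn.
have -> : (i == e) = false by apply/negbTE; rewrite neq_ltn (leq_ltn_trans Hi He).
by rewrite subr0.
Qed.

Lemma qp_stable m T d : (0 < m)%N -> eqT T (qp ('X^m) (T + d)) (qp ('X^m) T).
Proof.
move=> m0; elim: d => [|d IH]; first by rewrite addn0.
rewrite addnS qp_S.
apply: (@eqT_trans _ _ (qp ('X^m) (T + d) * 1)); last by rewrite mulr1.
apply: eqT_mull; rewrite -exprM; apply: one_sub_X_T.
nia.
Qed.

Lemma qp_stable' m T x : (0 < m)%N -> (T <= x)%N -> eqT T (qp ('X^m) x) (qp ('X^m) T).
Proof. by move=> m0 /subnKC <-; apply: qp_stable. Qed.

Lemma coef0_qp m x : (0 < m)%N -> (qp ('X^m) x)`_0 = 1.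
Proof.
move=> m0; elim: x => [|x IH]; first by rewrite /qp big_ord0 coefC.
rewrite qp_S coef0M IH coefB coefC -exprM coefXn /=.
have -> : (0%N == (m * x.+1)%N) = false by apply/negbTE; rewrite eq_sym muln_eq0 negb_or -!lt0n m0.
by rewrite subr0 mul1r.
Qed.

Lemma G_lim m N T r : (0 < m)%N -> (T < r)%N -> (T < N + N - r)%N -> (T < N)%N ->
  (r <= N + N)%N -> eqT T (qbin ('X^m) (N + N) r * qp ('X^m) N) 1.
Proof.
move=> m0 Hr1 Hr2 HN Hr.
set P := qp ('X^m) T.
set G := qbin _ _ _.
have H1 : eqT T (G * P * P) P.
  apply: (@eqT_trans _ _ (G * qp ('X^m) r * qp ('X^m) (N + N - r))).
    apply: (@eqT_trans _ _ (G * qp ('X^m) r * P)).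
      by apply: eqT_mulr; apply: eqT_mull; apply: eqT_sym; apply: qp_stable'; [|apply: ltnW].
    by apply: eqT_mull; apply: eqT_sym; apply: qp_stable'; [|apply: ltnW].
  rewrite qbin_qp //; apply: qp_stable' => //.
  by apply: leq_trans (ltnW HN) (leq_addr _ _).
have H2 : eqT T ((G * P - 1) * P) 0.
  move=> i Hi; rewrite mulrBl mul1r coefB H1 // subrr coef0 //.
have H3 := @eqT_cancel T _ _ H2 (coef0_qp m T m0).
apply: (@eqT_trans _ _ (G * P)).
  by apply: eqT_mull; apply: qp_stable'; [|apply: ltnW].
move=> i Hi; have := H3 i Hi; rewrite coefB coef0 => /eqP; rewrite subr_eq0 => /eqP.
by [].
Qed.

Lemma Ef_ge m N r : (3 <= m)%N -> (N - r <= Ef m N r)%N /\ (r - N <= Ef m N r)%N.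
Proof.
move=> Hm; rewrite /Ef; case: (leqP N r) => H.
  rewrite Qgk_eq; last lia.
  have h : (r - N <= (m - 1) * (r - N))%N by apply: leq_pmull; lia.
  lia.
rewrite Pgk_eq; last lia.
lia.
Qed.

Lemma F_coef m M T j : (3 <= m)%N -> (2 * T < M.+1)%N -> (j <= T)%N ->
  (qp ('X^m) M.+1 * Lprod m M.+1)`_j =
  \sum_(r < (M.+1 + M.+1).+1) (-1) ^+ (r + M.+1) * (Ef m M.+1 r == j)%:R.
Proof.
move=> Hm HT Hj.
rewrite theta_exact // mulr_sumr coef_sum; apply: eq_bigr => r _.
set G := qbin _ _ _.
have -> : qp 'X^m M.+1 * ((-1) ^+ (r + M.+1) * G * 'X^(Ef m M.+1 r)) =
   (-1) ^+ (r + M.+1) * ((G * qp 'X^m M.+1) * 'X^(Ef m M.+1 r)) by ring.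
rewrite coef_sign coefMXn.
case: ltnP => HE.
  by rewrite (_ : (Ef m M.+1 r == j) = false) ?mulr0 //; apply/negbTE; rewrite neq_ltn HE orbT.
have [Ha Hb] := @Ef_ge m M.+1 r Hm.
have Hr := ltn_ord r.
rewrite (@G_lim m M.+1 T r) //; try lia.
rewrite coef1 subn_eq0.
by rewrite [(Ef _ _ _ == j)]eq_sym eqn_leq HE andbT.
Qed.

Lemma fam m N s r i : (0 < m)%N -> (r < m)%N -> (s = 0 \/ (s = 1 /\ r = 0))%N ->
  (0 < i)%N -> (i < N)%N ->
  (\sum_(t <- iota 0 N | (m * (t + s) + r %| i)%N) (m * (t + s) + r) =
   \sum_(d <- divisors i | d %% m == r) d)%N.
Proof.
move=> m0 rm Hs i0 iN.
rewrite -(big_map (fun t => m * (t + s) + r)%N (fun x => x %| i)%N (fun x => x)).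
rewrite -big_filter -[RHS]big_filter.
apply: perm_big; apply: uniq_perm.
- apply: filter_uniq; rewrite map_inj_uniq ?iota_uniq //.
  by move=> a b /= H; nia.
- by apply: filter_uniq; apply: divisors_uniq.
move=> x; rewrite !mem_filter -dvdn_divisors //.
case Hx: (x %| i)%N; last by rewrite andbF.
rewrite andbT /=.
have x0 : (0 < x)%N by move: Hx; case: (x) => //; rewrite dvd0n; lia.
have xi : (x <= i)%N by apply: dvdn_leq.
apply/mapP/idP.
  by case=> t _ ->; rewrite mulnC modnMDl modn_small.
move=> /eqP Hr; exists (x %/ m - s)%N.
  rewrite mem_iota /= add0n.
  have := leq_div x m; lia.
have := divn_eq x m; rewrite Hr.
case: Hs => [->|[-> Hr0]].
  by rewrite subn0 addn0 mulnC.
move: (x %/ m)%N => q E; subst r.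
have q0 : (0 < q)%N by case: q E => //; lia.
by rewrite {1}E !Hr0 subnK // mulnC.
Qed.

Definition Llist m N : seq nat :=
  [seq (m * (t + 1) + 0)%N | t <- iota 0 N] ++ [seq (m * (t + 0) + 1)%N | t <- iota 0 N] ++
  [seq (m * (t + 0) + (m - 1))%N | t <- iota 0 N].

Lemma Llist_pos m N : (3 <= m)%N -> all (fun a => 0 < a)%N (Llist m N).
Proof.
move=> Hm; rewrite /Llist !all_cat !all_map.
by apply/and3P; split; apply/allP => t _ /=; lia.
Qed.

Lemma F_PL m N : qp ('X^m) N * Lprod m N = PL (Llist m N).
Proof.
rewrite /PL !big_cat /= !big_map /qp /Lprod big_split /=.
have I : iota 0 N = index_iota 0 N by rewrite /index_iota subn0.
rewrite I !big_mkord.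
have e1 : \prod_(i < N) (1 - 'X^(m * (i + 1) + 0)) = \prod_(t < N) (1 - ('X^m : {poly int}) ^+ t.+1).
  by apply: eq_bigr => t _; rewrite -exprM addn0 addn1.
have e2 : \prod_(i < N) (1 - 'X^(m * (i + 0) + 1)) = \prod_(i < N) (1 - 'X^(m * i + 1)) :> {poly int}.
  by apply: eq_bigr => t _; rewrite addn0.
have e3 : \prod_(i < N) (1 - 'X^(m * (i + 0) + (m - 1))) = \prod_(i < N) (1 - 'X^(m * i + (m - 1))) :> {poly int}.
  by apply: eq_bigr => t _; rewrite addn0.
by rewrite e1 e2 e3 mulrA.
Qed.

Lemma sigmap_split m i : (3 <= m)%N ->
  sigmap_nat m i = (\sum_(d <- divisors i | d %% m == 0) d +
                    \sum_(d <- divisors i | d %% m == 1) d +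
                    \sum_(d <- divisors i | d %% m == m - 1) d)%N.
Proof.
move=> Hm; rewrite /sigmap_nat !(big_mkcond (fun d => _ == _)) big_mkcond -!big_split /=.
rewrite big_mkcond; apply: eq_bigr => d _ /=.
have := ltn_pmod d (ltnW (ltnW Hm)); rewrite -subn1.
case: eqP => H0; case: eqP => H1; case: eqP => H2 //=; try lia.
Qed.

Lemma sL_sigma m N i : (3 <= m)%N -> (0 < i)%N -> (i < N)%N ->
  sL (Llist m N) i = (sigmap_nat m i)%:Z.
Proof.
move=> Hm i0 iN.
rewrite sigmap_split // -(@fam m N 1 0 i) -?(@fam m N 0 1 i) -?(@fam m N 0 (m - 1) i); try lia.
rewrite /Llist /sL !big_cat !big_map /= !PoszD.
by rewrite addrA !(big_morph Posz PoszD (erefl _)).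
Qed.

Lemma Ef_dbl m N r : (3 <= m)%N ->
  (2 * Ef m N r)%N%:Z = m%:Z * (r%:Z - N%:Z) * (r%:Z - N%:Z) + (m%:Z - 2) * (r%:Z - N%:Z).
Proof.
move=> Hm; rewrite /Ef; case: (leqP N r) => H.
  rewrite Qgk_eq; last lia.
  have := C2dbl (r - N); nia.
rewrite Pgk_eq; last lia.
have := C2dbl (N - r); nia.
Qed.

Lemma Ef_inj m N r1 r2 : (3 <= m)%N -> Ef m N r1 = Ef m N r2 -> r1 = r2.
Proof.
move=> Hm E.
have E2 := Ef_dbl m N r1 Hm; rewrite E Ef_dbl // in E2.
set d1 := (r1%:Z - N%:Z) in E2; set d2 := (r2%:Z - N%:Z) in E2.
have F : (d1 - d2) * (m%:Z * (d1 + d2 + 1) - 2) = 0.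
  have -> : (d1 - d2) * (m%:Z * (d1 + d2 + 1) - 2) =
    (m%:Z * d1 * d1 + (m%:Z - 2) * d1) - (m%:Z * d2 * d2 + (m%:Z - 2) * d2) by ring.
  by rewrite -E2 subrr.
move/eqP: F; rewrite mulf_eq0 => /orP [|].
  by rewrite subr_eq0 /d1 /d2 => /eqP H; lia.
move=> /eqP H.
have : (d1 + d2 + 1 <= 0) \/ (1 <= d1 + d2 + 1) by lia.
case=> H2; nia.
Qed.

Lemma sign_par a b : odd a = odd b -> (-1) ^+ a = (-1) ^+ b :> int.
Proof. by move=> H; rewrite -signr_odd H signr_odd. Qed.

Lemma eg_sum m M n : (3 <= m)%N -> (0 < n)%N -> (n < M.+1)%N ->
  eg (m + 2) n = \sum_(r < (M.+1 + M.+1).+1) (-1) ^+ (r + M.+1) * (Ef m M.+1 r == n)%:R.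
Proof.
move=> Hm n0 nN; set N := M.+1.
rewrite /eg eqn0Ngt n0 /=.
case: pickP => [k /andP [k0 Hk] | Hn].
  have kn : (k <= n)%N by have := ltn_ord k.
  have Hgen : forall r0 : 'I_(N + N).+1, Ef m N r0 = n -> odd (r0 + N) = odd k ->
      ((-1) ^+ k : int) = \sum_(r < (N + N).+1) (-1) ^+ (r + N) * (Ef m N r == n)%:R.
    move=> r0 Er0 Hodd.
    rewrite (bigD1 r0) //= Er0 eqxx mulr1 big1 ?addr0; first exact: sign_par.
    move=> r Hr; rewrite (_ : (Ef m N r == n) = false) ?mulr0 //.
    apply/negbTE/eqP => E; move/eqP: Hr; apply; apply: val_inj => /=.
    by apply: (@Ef_inj m N _ _ Hm); rewrite E Er0.
  case/orP: Hk => /eqP Hk.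
    have Hr0 : (N - k < (N + N).+1)%N by lia.
    apply: (Hgen (Ordinal Hr0)) => /=.
      rewrite /Ef; have -> : (N <= N - k)%N = false by lia.
      by have -> : (N - (N - k) = k)%N by lia.
    have -> : (N - k + N = k + (N - k).*2)%N by rewrite -addnn; lia.
    by rewrite oddD odd_double addbF.
  have Hr0 : (N + k < (N + N).+1)%N by lia.
  apply: (Hgen (Ordinal Hr0)) => /=.
    rewrite /Ef; have -> : (N <= N + k)%N = true by lia.
    by have -> : (N + k - N = k)%N by lia.
  rewrite /N !oddD /=; by case: (odd M); case: (odd k).
rewrite big1 // => r _.
case E: (Ef m N r == n); last by rewrite mulr0.
exfalso; move/eqP: E => E.
have [Ha Hb] := @Ef_ge m N r Hm.
move: E; rewrite /Ef; case: (leqP N r) => H E.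
  have Hk : (r - N < n.+1)%N by move: Hb; rewrite /Ef H E; lia.
  have := Hn (Ordinal Hk); rewrite /= E eqxx orbT andbT.
  have : (r - N != 0)%N by apply/eqP => h; move: E; rewrite h Qgk_eq ?bin0n; lia.
  by rewrite -lt0n => ->.
have EE : Ef m N r = n by rewrite /Ef leqNgt H /=.
have Hk : (N - r < n.+1)%N by lia.
have := Hn (Ordinal Hk); rewrite /= E eqxx andbT.
by have -> : (0 < N - r)%N by lia.
Qed.


Lemma sigmap_le0 m (x : int) : x <= 0 -> sigmap m x = 0.
Proof. by rewrite /sigmap => H; case: ifP => // H2; lia. Qed.

Lemma sigmap_pos m i : sigmap m (i.+1)%:Z = (sigmap_nat m i.+1)%:Z.
Proof. by rewrite /sigmap ltz_nat ltn0Sn absz_nat. Qed.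

Lemma Ef_N m N : Ef m N N = 0%N.
Proof. by rewrite /Ef leqnn subnn /Qgk mul0n div0n. Qed.

Lemma Ef_lo m N k : (k < N)%N -> Ef m N (N - k.+1) = Pgk (m + 2) k.+1.
Proof.
move=> H; rewrite /Ef (_ : (N <= N - k.+1)%N = false); last lia.
by rewrite (_ : (N - (N - k.+1))%N = k.+1); last lia.
Qed.

Lemma Ef_hi m N k : Ef m N (k + N.+1) = Qgk (m + 2) k.+1.
Proof.
rewrite /Ef (_ : (N <= k + N.+1)%N = true); last lia.
by rewrite (_ : (k + N.+1 - N)%N = k.+1); last lia.
Qed.

Lemma split_sym (f : nat -> int) N :
  \sum_(0 <= r < (N + N).+1) f r =
  f N + \sum_(0 <= k < N) (f (N - k.+1)%N + f (k + N.+1)%N).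
Proof.
have A : \sum_(0 <= i < N) f i = \sum_(0 <= i < N) f (N - i.+1)%N.
  by rewrite big_nat_rev /= add0n.
have B : \sum_(N.+1 <= i < (N + N).+1) f i = \sum_(0 <= i < N) f (i + N.+1)%N.
  rewrite -{1}(add0n N.+1) big_addn.
  by rewrite (_ : ((N + N).+1 - N.+1)%N = N); last lia.
rewrite [LHS](@big_cat_nat _ _ _ N 0 (N + N).+1) //=; last lia.
rewrite [X in _ + X = _](@big_cat_nat _ _ _ N.+1 N (N + N).+1) //=; last lia.
rewrite big_nat1 A B big_split /=; ring.
Qed.

Theorem theorem2p9 (m n : nat) (hm : (3 <= m)%N) (hn : (1 <= n)%N) :
  sigmap m n%:Z =
    - (n%:Z * eg (m + 2) n)
    + \sum_(1 <= k < n)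
        (-1) ^+ k.+1 *
          (sigmap m (n%:Z - (Pgk (m + 2) k)%:Z)
           + sigmap m (n%:Z - (Qgk (m + 2) k)%:Z)).
Proof.
set M := (2 * n + 1)%N.
set N := M.+1.
set L := Llist m N.
have HL : all (fun a => 0 < a)%N L := @Llist_pos m N hm.
have Fc : forall j, (j <= n)%N -> (PL L)`_j =
    \sum_(0 <= r < (N + N).+1) (-1) ^+ (r + N) * (Ef m N r == j)%:R.
  by move=> j Hj; rewrite -F_PL big_mkord (@F_coef m M n j) //; rewrite /N /M; lia.
have Hen : (PL L)`_n = eg (m + 2) n.
  rewrite -F_PL (@F_coef m M n n) //; last by rewrite /N /M; lia.
  by rewrite (@eg_sum m M n) //; rewrite /M; lia.
have Hlog := @logder_coef n L n HL (leqnn n).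
set sg := fun j : nat => sigmap m (n%:Z - j%:Z).
have S1 : \sum_(i < n) sL L i.+1 * (PL L)`_(n - i.+1) =
          \sum_(0 <= j < n.+1) (PL L)`_j * sg j.
  rewrite big_nat_recr //= /sg subrr (@sigmap_le0 m 0) // mulr0 addr0.
  rewrite -(big_mkord xpredT (fun i => sL L i.+1 * (PL L)`_(n - i.+1))) big_nat_rev /= add0n.
  apply: eq_big_nat => i /andP [_ Hi].
  have e1 : ((n - i.+1).+1 = n - i)%N by lia.
  have e2 : (n - (n - i.+1).+1 = i)%N by lia.
  rewrite e2 mulrC; congr (_ * _).
  rewrite (_ : n%:Z - i%:Z = (n - i.+1).+1%:Z); last lia.
  rewrite sigmap_pos (@sL_sigma m N (n - i.+1).+1) //; rewrite /N /M; lia.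
have S2 : \sum_(0 <= j < n.+1) (PL L)`_j * sg j =
          \sum_(0 <= r < (N + N).+1) (-1) ^+ (r + N) * sg (Ef m N r).
  transitivity (\sum_(0 <= j < n.+1) \sum_(0 <= r < (N + N).+1)
      (-1) ^+ (r + N) * ((Ef m N r == j)%:R * sg j)).
    apply: eq_big_nat => j /andP [_ Hj]; rewrite Fc // big_distrl.
    by apply: eq_bigr => r _; rewrite mulrA.
  rewrite exchange_big_nat; apply: eq_bigr => r _; rewrite -mulr_sumr; congr (_ * _).
  transitivity (\sum_(0 <= j < n.+1 | j == Ef m N r) sg j).
    rewrite [RHS]big_mkcond; apply: eq_bigr => j _; rewrite eq_sym.
    by case: eqP => _; [rewrite mul1r | rewrite mul0r].
  rewrite big_nat1_eq; case: ifP => // H.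
  by rewrite /sg sigmap_le0 //; move: H; lia.
have S3 : \sum_(0 <= r < (N + N).+1) (-1) ^+ (r + N) * sg (Ef m N r) =
   sg 0%N + \sum_(0 <= k < N) (-1) ^+ k.+1 * (sg (Pgk (m + 2) k.+1) + sg (Qgk (m + 2) k.+1)).
  rewrite split_sym Ef_N; congr (_ + _).
    by rewrite -signr_odd addnn odd_double expr0 mul1r.
  apply: eq_big_nat => k /andP [_ Hk]; rewrite Ef_lo // Ef_hi mulrDr; congr (_ + _); congr (_ * _); apply: sign_par.
    have -> : (N - k.+1 + N = k.+1 + (N - k.+1).*2)%N by rewrite -addnn; lia.
    by rewrite oddD odd_double addbF.
  have -> : (k + N.+1 + N = k.+1 + N.*2)%N by rewrite -addnn; lia.
  by rewrite oddD odd_double addbF.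
have S4 : \sum_(0 <= k < N) (-1) ^+ k.+1 * (sg (Pgk (m + 2) k.+1) + sg (Qgk (m + 2) k.+1)) =
          \sum_(1 <= k < n) (-1) ^+ k * (sg (Pgk (m + 2) k) + sg (Qgk (m + 2) k)).
  rewrite -(big_add1 _ _ 0 N.+1 xpredT (fun k => (-1) ^+ k * (sg (Pgk (m + 2) k) + sg (Qgk (m + 2) k)))).
  rewrite (@big_cat_nat _ _ _ n 1 N.+1) //=; last by rewrite /N /M; lia.
  rewrite [X in _ + X = _]big_nat [X in _ + X = _]big1 ?addr0 // => k /andP [Hk _].
  have h1 := @Pgk_eq m k (ltnW hm).
  have h2 := @Qgk_eq m k (ltnW hm).
  have h3 : (k <= (m - 1) * k)%N by apply: leq_pmull; lia.
  by rewrite /sg !sigmap_le0 ?addr0 ?mulr0 //; lia.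
move: Hlog; rewrite S1 S2 S3 S4 Hen => Hlog.
have -> : n%:Z * eg (m + 2) n = eg (m + 2) n *+ n by rewrite mulrC -mulr_natr natz.
rewrite Hlog opprK /sg subr0 -addrA -big_split /=.
rewrite big1 ?addr0 // => k _; rewrite exprS; ring.
Qed.
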